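(* The metric space $L_\omega$ satisfies $\operatorname{trasdim} L_\omega=\omega$, where $\omega$ is the first infinite ordinal.
   Context: Let $X=\bigsqcup_{i=1}^\infty\mathbb Z^i$ (disjoint union). For $a=(a_1,\dots,a_l)\in\mathbb Z^l$ and $b=(b_1,\dots,b_k)\in\mathbb Z^k$ with $l\le k$, let $a'=(a_1,\dots,a_l,0,\dots,0)\in\mathbb Z^k$, let $c=0$ if $l=k$ and $c=l+(l+1)+\dots+(k-1)$ if $l<k$, and set $d_\infty(a,b)=d_\infty(b,a)=\max\{d(a',b),c\}$, where $d$ is the sup-metric $d(x,y)=\max_j|x_j-y_j|$ on $\mathbb Z^k$. $L_\infty=(X,d_\infty)$, and $L_\omega=\bigcup_{k=1}^\infty(k\mathbb Z)^k\subset L_\infty$ with the restricted metric, where $k\mathbb Z=\{kl:l\in\mathbb Z\}$ and $(k\mathbb Z)^k\subset\mathbb Z^k$. A family $\mathcal A$ of subsets is uniformly bounded if there is $C>0$ with $\operatorname{diam}A\le C$ for all $A\in\mathcal A$; it is $r$-disjoint if $d(A_1,A_2)\ge r$ for all distinct $A_1,A_2\in\mathcal A$. For a set $L$, $\mathrm{Fin}\,L$ is the collection of finite nonempty subsets of $L$. For $M\subset \mathrm{Fin}\,L$ and $\sigma\in\{\emptyset\}\cup\mathrm{Fin}\,L$, $M^\sigma=\{\tau\in\mathrm{Fin}\,L:\sigma\cup\tau\in M,\ \sigma\cap\tau=\emptyset\}$, and $M^a=M^{\{a\}}$. The ordinal $\operatorname{Ord}M$: $\operatorname{Ord}M=0$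 iff $M=\emptyset$; $\operatorname{Ord}M\le\alpha$ iff $\operatorname{Ord}M^a<\alpha$ for every $a\in L$; $\operatorname{Ord}M=\alpha$ iff $\operatorname{Ord}M\le\alpha$ and not $\operatorname{Ord}M<\alpha$; $\operatorname{Ord}M=\infty$ iff $\operatorname{Ord} M\le\alpha$ for no ordinal $\alpha$. For a metric space $(X,d)$, $A(X,d)$ is the set of $\sigma\in\mathrm{Fin}\,\mathbb N$ such that there do NOT exist uniformly bounded families $\mathcal V_i$, $i\in\sigma$, with $\bigcup_{i\in\sigma}\mathcal V_i$ covering $X$ and each $\mathcal V_i$ being $i$-disjoint. Define $\operatorname{trasdim}X=\operatorname{Ord}A(X,d)$, except $\operatorname{trasdim}X=-1$ iff $X$ is bounded. *)

(* Defs.v *)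
From Stdlib Require Import ZArith Reals List.
Set Implicit Arguments.

(* A point of Z^k is a list of integers of length k (k >= 1). *)

Definition pad (a : list Z) (k : nat) : list Z := a ++ repeat 0%Z (k - length a).

(* sup-metric on Z^k (lists of equal length) *)
Fixpoint supd (a b : list Z) : Z :=
  match a, b with
  | x :: a', y :: b' => Z.max (Z.abs (x - y)) (supd a' b')
  | _, _ => 0%Z
  end.

Definition cpen (l k : nat) : nat := fold_right plus 0%nat (seq l (k - l)).

Definition dinf (a b : list Z) : Z :=
  let l := length a in let k := length b in
  if (l <=? k)%nat
  then Z.max (supd (pad a k) b) (Z.of_nat (cpen l k))
  else Z.max (supd (pad b l) a) (Z.of_nat (cpen k l)).

(* L_omega = union over k >= 1 of (kZ)^k *)
Definition Lomega : Type :=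
  { a : list Z | (0 < length a)%nat /\ Forall (fun x => (Z.of_nat (length a) | x)%Z) a }.

Definition dLomega (a b : Lomega) : R := IZR (dinf (proj1_sig a) (proj1_sig b)).

Definition FinNE (L : Type) (s : L -> Prop) : Prop :=
  (exists l : list L, forall x, s x <-> In x l) /\ (exists x, s x).

Definition Mpt (L : Type) (M : (L -> Prop) -> Prop) (a : L) : (L -> Prop) -> Prop :=
  fun tau => FinNE tau /\ M (fun x => x = a \/ tau x) /\ ~ tau a.

(* Ord M <= n for a natural number n:
   Ord M <= 0 iff Ord M = 0 iff M is empty;
   Ord M <= n+1 iff Ord M^a < n+1 (i.e. Ord M^a <= n) for every a. *)
Fixpoint OrdLe (L : Type) (M : (L -> Prop) -> Prop) (n : nat) : Prop :=
  match n with
  | O => forall tau, ~ M tau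
  | S n' => forall a, OrdLe (Mpt M a) n'
  end.

(* Ord M = omega: Ord M <= omega (every Ord M^a < omega) and not Ord M < omega *)
Definition OrdEqOmega (L : Type) (M : (L -> Prop) -> Prop) : Prop :=
  (forall a, exists n, OrdLe (Mpt M a) n) /\ ~ (exists n, OrdLe M n).

Definition PN : Type := { n : nat | (0 < n)%nat }.

Definition uniformly_bounded (X : Type) (d : X -> X -> R) (F : (X -> Prop) -> Prop) : Prop :=
  exists C : R, (0 < C)%R /\
    forall A, F A -> forall x y, A x -> A y -> (d x y <= C)%R.

Definition r_disjoint (X : Type) (d : X -> X -> R) (r : R) (F : (X -> Prop) -> Prop) : Prop :=
  forall A1 A2, F A1 -> F A2 -> A1 <> A2 ->
    forall x y, A1 x -> A2 y -> (r <= d x y)%R.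

Definition Aset (X : Type) (d : X -> X -> R) : (PN -> Prop) -> Prop :=
  fun sigma => FinNE sigma /\
    ~ (exists V : PN -> (X -> Prop) -> Prop,
          (forall i, sigma i ->
              uniformly_bounded d (V i) /\ r_disjoint d (INR (proj1_sig i)) (V i)) /\
          (forall x, exists i, sigma i /\ exists U, V i U /\ U x)).

Definition bounded_space (X : Type) (d : X -> X -> R) : Prop :=
  exists C : R, forall x y, (d x y <= C)%R.

(* trasdim X = omega  (trasdim X = -1 iff X bounded, otherwise Ord A(X,d)) *)
Definition trasdim_eq_omega (X : Type) (d : X -> X -> R) : Prop :=
  ~ bounded_space d /\ OrdEqOmega (Aset d).

(* Main.v *)
Require Import Defs.
From Stdlib Require Import ZArith Reals List Lia Lra.
From Stdlib Require Import Classical FunctionalExtensionality PropExtensionality.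
Open Scope Z_scope.

Lemma supd_nonneg a b : 0 <= supd a b.
Proof. revert b; induction a as [|x a IH]; intros [|y b]; simpl; try lia; specialize (IH b); lia. Qed.

Lemma supd_ge a b i : (i < length a)%nat -> (i < length b)%nat ->
  Z.abs (nth i a 0 - nth i b 0) <= supd a b.
Proof.
revert b i; induction a as [|x a IH]; intros [|y b] i Ha Hb; simpl in *; try lia.
destruct i as [|i]; [lia|]. specialize (IH b i ltac:(lia) ltac:(lia)); lia.
Qed.

Lemma supd_le a b M : 0 <= M -> length a = length b ->
  (forall i, (i < length a)%nat -> Z.abs (nth i a 0 - nth i b 0) <= M) -> supd a b <= M.
Proof.
revert b; induction a as [|x a IH]; intros [|y b] HM Hl H; simpl in *; try lia.
apply Z.max_lub.
- apply (H 0%nat); lia.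
- apply IH; [lia|lia|]. intros i Hi; apply (H (S i)); lia.
Qed.

Lemma cpen_same l : cpen l l = 0%nat.
Proof. unfold cpen; rewrite Nat.sub_diag; reflexivity. Qed.

Lemma cpen_ge l k : (l < k)%nat -> (l <= cpen l k)%nat.
Proof.
intros H; unfold cpen. destruct (k - l)%nat eqn:E; [lia|]. simpl. lia.
Qed.

Lemma dinf_same a b : length a = length b -> dinf a b = supd a b.
Proof.
intros H; unfold dinf; rewrite H, Nat.leb_refl, cpen_same; unfold pad.
rewrite H, Nat.sub_diag; simpl; rewrite app_nil_r.
pose proof (supd_nonneg a b); lia.
Qed.

Lemma dinf_diff a b : length a <> length b ->
  Z.of_nat (Nat.min (length a) (length b)) <= dinf a b.
Proof.
intros H; unfold dinf.
destruct (Nat.leb_spec (length a) (length b)).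
- pose proof (cpen_ge (length a) (length b) ltac:(lia)).
  rewrite Nat.min_l by lia. lia.
- pose proof (cpen_ge (length b) (length a) ltac:(lia)).
  rewrite Nat.min_r by lia. lia.
Qed.

Lemma dinf_nonneg a b : 0 <= dinf a b.
Proof. unfold dinf; destruct (_ <=? _)%nat; lia. Qed.

Lemma list_neq_nth (a b : list Z) : length a = length b -> a <> b ->
  exists i, (i < length a)%nat /\ nth i a 0 <> nth i b 0.
Proof.
revert b; induction a as [|x a IH]; intros [|y b] Hl Hne; simpl in *; try lia.
- congruence.
- destruct (Z.eq_dec x y) as [->|Hxy].
  + destruct (IH b ltac:(lia)) as [i [Hi Hn]]; [congruence|].
    exists (S i); split; [lia|exact Hn].
  + exists 0%nat; split; [lia|exact Hxy].
Qed.

Lemma ordle_bound (L : Type) (n : nat) : forall (M : (L -> Prop) -> Prop),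
  (forall s, M s -> exists x, s x) ->
  (forall s, M s -> forall l, NoDup l -> (forall x, In x l -> s x) -> (length l <= n)%nat) ->
  OrdLe M n.
Proof.
induction n as [|n IH]; intros M Hne Hb; simpl.
- intros tau Ht. destruct (Hne tau Ht) as [x Hx].
  pose proof (Hb tau Ht (x :: nil) ltac:(constructor; [simpl; tauto|constructor])
     ltac:(intros y [->|[]]; exact Hx)). simpl in H; lia.
- intros a; apply IH.
  + intros s [[_ Hs] _]; exact Hs.
  + intros s [_ [Hm Hna]] l Hl Hin.
    assert (Hal : NoDup (a :: l)).
    { constructor; [intros Ha; apply Hna, Hin, Ha|exact Hl]. }
    pose proof (Hb _ Hm (a :: l) Hal ltac:(intros x [->|Hx]; [left; reflexivity|right; apply Hin, Hx])).
    simpl in H; lia.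
Qed.

Lemma not_ordle (L : Type) (n : nat) : forall (M : (L -> Prop) -> Prop) (l : list L),
  NoDup l -> length l = S n -> M (fun x => In x l) -> ~ OrdLe M n.
Proof.
induction n as [|n IH]; intros M l Hnd Hl HM; simpl.
- intros H; exact (H _ HM).
- destruct l as [|a l]; [discriminate|]. intros H.
  inversion Hnd; subst.
  apply (IH (Mpt M a) l H3 ltac:(simpl in Hl; lia)); [|apply H].
  split; [|split].
  + split; [exists l; tauto|]. destruct l as [|b l]; [discriminate|]. exists b; left; reflexivity.
  + replace (fun x => x = a \/ In x l) with (fun x => In x (a :: l)); [exact HM|].
    apply functional_extensionality; intros x; apply propositional_extensionality; simpl.
    split; intros [H'|H']; auto.
  + exact H2.
Qed.

Lemma mk1_proof (z : Z) : (0 < length (z :: nil))%nat /\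
  Forall (fun x => (Z.of_nat (length (z :: nil)) | x)%Z) (z :: nil).
Proof. split; [simpl; lia|]. constructor; [apply Z.divide_1_l|constructor]. Qed.

Definition mk1 (z : Z) : Lomega := exist _ (z :: nil) (mk1_proof z).

Lemma unbounded : ~ bounded_space dLomega.
Proof.
intros [C HC].
destruct (archimed C) as [H1 _].
set (z := up C) in *.
specialize (HC (mk1 0) (mk1 z)). unfold dLomega in HC; simpl in HC.
rewrite dinf_same in HC by reflexivity. simpl in HC.
assert (Hz : (0 <= z)%Z \/ (z < 0)%Z) by lia.
assert (IZR z <= IZR (Z.max (Z.abs (- z)) 0))%R by (apply IZR_le; lia).
lra.
Qed.

Lemma far_high (x y : Lomega) (a : nat) : (a <= length (proj1_sig x))%nat ->
  (a <= length (proj1_sig y))%nat -> proj1_sig x <> proj1_sig y ->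
  Z.of_nat a <= dinf (proj1_sig x) (proj1_sig y).
Proof.
destruct x as [u [Hu Fu]], y as [v [Hv Fv]]; simpl; intros Ha Hb Hne.
destruct (Nat.eq_dec (length u) (length v)) as [E|E].
- rewrite dinf_same by exact E.
  destruct (list_neq_nth u v E Hne) as [i [Hi Hn]].
  rewrite Forall_nth in Fu, Fv.
  destruct (Fu i 0 Hi) as [q1 Hq1]. destruct (Fv i 0 ltac:(lia)) as [q2 Hq2].
  pose proof (supd_ge u v i Hi ltac:(lia)).
  rewrite Hq1, Hq2 in *. rewrite <- E in *.
  assert (q1 <> q2) by (intros ->; apply Hn; reflexivity).
  assert (Z.abs (q1 * Z.of_nat (length u) - q2 * Z.of_nat (length u)) >= Z.of_nat (length u)).
  { replace (q1 * Z.of_nat (length u) - q2 * Z.of_nat (length u)) with ((q1 - q2) * Z.of_nat (length u)) by ring.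
    rewrite Z.abs_mul. assert (1 <= Z.abs (q1 - q2)) by lia.
    assert (0 <= Z.abs (Z.of_nat (length u))) by lia. rewrite (Z.abs_eq (Z.of_nat (length u))) by lia. nia. }
  lia.
- pose proof (dinf_diff u v E). lia.
Qed.

Fixpoint allb (d : nat) : list (list bool) :=
  match d with
  | O => nil :: nil
  | S d => flat_map (fun q => (false :: q) :: (true :: q) :: nil) (allb d)
  end.

Lemma allb_in q : In q (allb (length q)).
Proof.
induction q as [|b q IH]; simpl; [left; reflexivity|].
apply in_flat_map. exists q; split; [exact IH|]. destruct b; simpl; tauto.
Qed.

Definition idx (a : nat) : list (nat * list bool) :=
  flat_map (fun d => map (fun q => (d, q)) (allb d)) (seq 1 (a - 1)).

Lemma idx_in a (q : list bool) : (1 <= length q < a)%nat -> In (length q, q) (idx a).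
Proof.
intros H; unfold idx; apply in_flat_map; exists (length q); split.
- apply in_seq; lia.
- apply in_map, allb_in.
Qed.

Lemma odd_far x y : Z.odd x = Z.odd y -> x <> y -> 2 <= Z.abs (x - y).
Proof.
intros Ho Hne.
assert (Hm : (x - y) mod 2 = 0).
{ rewrite Zmod_odd, Z.odd_sub, Ho. destruct (Z.odd y); reflexivity. }
pose proof (Z.div_mod (x - y) 2 ltac:(lia)). rewrite Hm in H.
assert ((x - y) / 2 <> 0) by (intros E; rewrite E in H; lia).
lia.
Qed.

Lemma div_same R z1 z2 : 0 < R -> z1 / R = z2 / R -> Z.abs (z1 - z2) < R.
Proof.
intros HR E.
pose proof (Z.div_mod z1 R ltac:(lia)). pose proof (Z.div_mod z2 R ltac:(lia)).
pose proof (Z.mod_pos_bound z1 R HR). pose proof (Z.mod_pos_bound z2 R HR).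
rewrite E in H. lia.
Qed.

Lemma div_far R z1 z2 : 0 < R -> 2 <= Z.abs (z1 / R - z2 / R) -> R + 1 <= Z.abs (z1 - z2).
Proof.
intros HR E.
pose proof (Z.div_mod z1 R ltac:(lia)). pose proof (Z.div_mod z2 R ltac:(lia)).
pose proof (Z.mod_pos_bound z1 R HR). pose proof (Z.mod_pos_bound z2 R HR).
set (q1 := z1 / R) in *. set (q2 := z2 / R) in *.
set (r1 := z1 mod R) in *. set (r2 := z2 mod R) in *.
destruct (Z.le_ge_cases q1 q2).
- assert (q2 - q1 >= 2) by lia. assert (R * (q2 - q1) >= 2 * R) by nia. lia.
- assert (q1 - q2 >= 2) by lia. assert (R * (q1 - q2) >= 2 * R) by nia. lia.
Qed.

Definition boxs (R : Z) (b : list Z) : Lomega -> Prop :=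
  fun y => map (fun z => z / R) (proj1_sig y) = b.

Lemma nth_map_div R (u : list Z) i : nth i (map (fun z => z / R) u) 0 = nth i u 0 / R.
Proof.
revert i; induction u as [|z u IH]; intros [|i]; simpl; try reflexivity;
  try (rewrite Zdiv_0_l; reflexivity). apply IH.
Qed.

Lemma nth_map_odd (u : list Z) i : nth i (map Z.odd u) false = Z.odd (nth i u 0).
Proof. change false with (Z.odd 0). rewrite map_nth. reflexivity. Qed.

Lemma box_close R b y1 y2 : 0 < R -> boxs R b y1 -> boxs R b y2 ->
  dinf (proj1_sig y1) (proj1_sig y2) <= R.
Proof.
unfold boxs; intros HR H1 H2.
assert (El : length (proj1_sig y1) = length (proj1_sig y2)).
{ rewrite <- (length_map (fun z => z / R) (proj1_sig y1)), <- (length_map (fun z => z / R) (proj1_sig y2)), H1, H2; reflexivity. }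
rewrite dinf_same by exact El.
apply supd_le; [lia|exact El|]. intros i Hi.
assert (E : nth i (map (fun z => z / R) (proj1_sig y1)) 0 = nth i (map (fun z => z / R) (proj1_sig y2)) 0)
  by (rewrite H1, H2; reflexivity).
rewrite !nth_map_div in E. pose proof (div_same R _ _ HR E). lia.
Qed.

Lemma box_far R b1 b2 y1 y2 : 0 < R -> boxs R b1 y1 -> boxs R b2 y2 ->
  length b1 = length b2 -> map Z.odd b1 = map Z.odd b2 -> b1 <> b2 ->
  R + 1 <= dinf (proj1_sig y1) (proj1_sig y2).
Proof.
unfold boxs; intros HR H1 H2 Hl Ho Hne.
assert (El : length (proj1_sig y1) = length (proj1_sig y2)).
{ rewrite <- (length_map (fun z => z / R) (proj1_sig y1)), <- (length_map (fun z => z / R) (proj1_sig y2)), H1, H2; exact Hl. }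
rewrite dinf_same by exact El.
destruct (list_neq_nth b1 b2 Hl Hne) as [i [Hi Hn]].
assert (Eo : nth i (map Z.odd b1) false = nth i (map Z.odd b2) false) by (rewrite Ho; reflexivity).
rewrite !nth_map_odd in Eo.
pose proof (odd_far _ _ Eo Hn).
rewrite <- H1, <- H2, !nth_map_div in H.
pose proof (div_far R _ _ HR H).
assert (Hi1 : (i < length (proj1_sig y1))%nat).
{ rewrite <- (length_map (fun z => z / R) (proj1_sig y1)), H1; exact Hi. }
assert (Hi2 : (i < length (proj1_sig y2))%nat) by lia.
pose proof (supd_ge _ _ i Hi1 Hi2). lia.
Qed.

Definition sumPN (l : list PN) : Z := fold_right (fun i s => Z.of_nat (proj1_sig i) + s) 0 l.

Lemma sumPN_ge l : 0 <= sumPN l /\ forall i, In i l -> Z.of_nat (proj1_sig i) <= sumPN l.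
Proof.
induction l as [|j l [IH1 IH2]]; simpl.
- split; [lia|tauto].
- split; [lia|]. intros i [->|Hi]; [lia|]. specialize (IH2 i Hi); lia.
Qed.

Lemma cover_bound (a : PN) (tau : PN -> Prop) (l : list PN) :
  Aset dLomega (fun x => x = a \/ tau x) -> ~ tau a -> NoDup l ->
  (forall x, In x l -> tau x) -> (length l < length (idx (proj1_sig a)))%nat.
Proof.
intros [_ HA] Hna Hnd Hin.
destruct (Nat.lt_ge_cases (length l) (length (idx (proj1_sig a)))) as [H|Hge]; [exact H|exfalso; apply HA].
set (K := length (idx (proj1_sig a))) in *.
destruct (sumPN_ge l) as [HS0 HS].
set (R := 1 + sumPN l).
assert (HR : 0 < R) by (unfold R; lia).
set (D := (0%nat, @nil bool)).
exists (fun i U => (i = a /\ exists z, (proj1_sig a <= length z)%nat /\ U = (fun y : Lomega => proj1_sig y = z))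
   \/ (exists t, (t < K)%nat /\ nth t l a = i /\ exists b, length b = fst (nth t (idx (proj1_sig a)) D)
         /\ map Z.odd b = snd (nth t (idx (proj1_sig a)) D) /\ U = boxs R b)).
split.
- intros i Hi. split.
  + exists (IZR R). split; [apply IZR_lt; lia|].
    intros U HU y1 y2 H1 H2. unfold dLomega. apply IZR_le.
    destruct HU as [[_ [z [_ ->]]] | [t [_ [_ [b [_ [_ ->]]]]]]].
    * rewrite H1, H2, dinf_same by reflexivity. apply supd_le; [lia|reflexivity|].
      intros j _. rewrite Z.sub_diag. simpl. lia.
    * exact (box_close R b y1 y2 HR H1 H2).
  + intros U1 U2 HU1 HU2 Hne y1 y2 H1 H2. unfold dLomega.
    rewrite INR_IZR_INZ. apply IZR_le.
    destruct HU1 as [[Ei1 [z1 [Hz1 ->]]] | [t1 [Ht1 [Et1 [b1 [Hb1 [Ho1 ->]]]]]]];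
    destruct HU2 as [[Ei2 [z2 [Hz2 ->]]] | [t2 [Ht2 [Et2 [b2 [Hb2 [Ho2 ->]]]]]]].
    * subst i. assert (z1 <> z2) by (intros ->; apply Hne; reflexivity).
      apply far_high; congruence.
    * exfalso; apply Hna. rewrite Ei1 in Et2. rewrite <- Et2. apply Hin, nth_In; lia.
    * exfalso; apply Hna. rewrite Ei2 in Et1. rewrite <- Et1. apply Hin, nth_In; lia.
    * assert (t1 = t2).
      { rewrite (NoDup_nth l a) in Hnd. apply (Hnd t1 t2 ltac:(lia) ltac:(lia)). congruence. }
      subst t2.
      assert (b1 <> b2) by (intros ->; apply Hne; reflexivity).
      pose proof (box_far R b1 b2 y1 y2 HR H1 H2 ltac:(congruence) ltac:(congruence) H).
      assert (In i l) by (rewrite <- Et1; apply nth_In; lia).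
      specialize (HS i H3). unfold R in H0. lia.
- intros x. destruct (le_lt_dec (proj1_sig a) (length (proj1_sig x))) as [Hl|Hl].
  + exists a. split; [left; reflexivity|].
    exists (fun y : Lomega => proj1_sig y = proj1_sig x). split; [|reflexivity].
    left; split; [reflexivity|]. exists (proj1_sig x); split; [exact Hl|reflexivity].
  + set (b := map (fun z => z / R) (proj1_sig x)).
    set (q := map Z.odd b).
    assert (Hlq : length q = length (proj1_sig x)) by (unfold q, b; rewrite !length_map; reflexivity).
    assert (Hx0 : (0 < length (proj1_sig x))%nat) by (destruct (proj2_sig x) as [Hu _]; exact Hu).
    destruct (In_nth _ _ D (idx_in (proj1_sig a) q ltac:(lia))) as [t [Ht Et]].
    exists (nth t l a). split; [right; apply Hin, nth_In; unfold K in Hge; lia|].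
    exists (boxs R b). split; [|reflexivity].
    right. exists t. split; [exact Ht|]. split; [reflexivity|].
    exists b. rewrite Et. simpl. split; [unfold q; rewrite length_map; reflexivity|].
    split; reflexivity.
Qed.

Lemma upper (a : PN) : exists n, OrdLe (Mpt (Aset dLomega) a) n.
Proof.
exists (length (idx (proj1_sig a))). apply ordle_bound.
- intros s [[_ Hs] _]; exact Hs.
- intros s [_ [HA Hna]] l Hnd Hin.
  pose proof (cover_bound a s l HA Hna Hnd Hin). lia.
Qed.

Definition mkPN (j : nat) : PN := exist _ (S j) (Nat.lt_0_succ j).

Definition lst (k : nat) : list PN := map (fun t => mkPN (2 * k + t)) (seq 0 k).

Lemma lst_len k : length (lst k) = k.
Proof. unfold lst; rewrite length_map, length_seq; reflexivity. Qed.

Lemma lst_nodup k : NoDup (lst k).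
Proof.
unfold lst; apply NoDup_map_NoDup_ForallPairs; [|apply seq_NoDup].
intros t1 t2 _ _ E. unfold mkPN in E. injection E; lia.
Qed.

Lemma lst_in k x : In x (lst k) -> (2 * k < proj1_sig x <= 3 * k)%nat.
Proof.
unfold lst; rewrite in_map_iff; intros [t [<- Ht]]. apply in_seq in Ht. simpl. lia.
Qed.

Definition embl (m : nat) (f : nat -> nat) : list Z :=
  map (fun c => Z.of_nat (S m * f c)) (seq 0 (S m)).

Lemma embl_len m f : length (embl m f) = S m.
Proof. unfold embl; rewrite length_map, length_seq; reflexivity. Qed.

Lemma embl_nth m f c : (c < S m)%nat -> nth c (embl m f) 0 = Z.of_nat (S m * f c).
Proof.
intros Hc. unfold embl.
set (g := fun c => Z.of_nat (S m * f c)).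
assert (E : nth c (map g (seq 0 (S m))) (g 0%nat) = g (nth c (seq 0 (S m)) 0%nat)) by apply map_nth.
rewrite seq_nth in E by exact Hc. replace (0 + c)%nat with c in E by lia.
change (Z.of_nat (S m * f c)) with (g c). rewrite <- E.
apply nth_indep. rewrite length_map, length_seq; exact Hc.
Qed.

Lemma embl_ok m f : (0 < length (embl m f))%nat /\
  Forall (fun x => (Z.of_nat (length (embl m f)) | x)%Z) (embl m f).
Proof.
rewrite embl_len; split; [lia|].
unfold embl; apply Forall_map, Forall_forall; intros c _.
exists (Z.of_nat (f c)). lia.
Qed.

Definition emb m f : Lomega := exist _ (embl m f) (embl_ok m f).

Lemma emb_dist_ge m f g c : (c < S m)%nat ->
  Z.of_nat (S m) * Z.abs (Z.of_nat (f c) - Z.of_nat (g c)) <= dinf (embl m f) (embl m g).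
Proof.
intros Hc. rewrite dinf_same by (rewrite !embl_len; reflexivity).
pose proof (supd_ge (embl m f) (embl m g) c ltac:(rewrite embl_len; exact Hc) ltac:(rewrite embl_len; exact Hc)).
rewrite !embl_nth in H by exact Hc.
rewrite !Nat2Z.inj_mul in H.
replace (Z.of_nat (S m) * Z.of_nat (f c) - Z.of_nat (S m) * Z.of_nat (g c))
  with (Z.of_nat (S m) * (Z.of_nat (f c) - Z.of_nat (g c))) in H by ring.
rewrite Z.abs_mul, (Z.abs_eq (Z.of_nat (S m))) in H by lia. exact H.
Qed.

Lemma emb_dist_le m f g : (forall c, (c < S m)%nat -> (f c <= g c + 1 /\ g c <= f c + 1)%nat) ->
  dinf (embl m f) (embl m g) <= Z.of_nat (S m).
Proof.
intros H. rewrite dinf_same by (rewrite !embl_len; reflexivity).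
apply supd_le; [lia|rewrite !embl_len; reflexivity|].
intros c Hc; rewrite embl_len in Hc. rewrite !embl_nth by exact Hc.
specialize (H c Hc). rewrite !Nat2Z.inj_mul.
replace (Z.of_nat (S m) * Z.of_nat (f c) - Z.of_nat (S m) * Z.of_nat (g c))
  with (Z.of_nat (S m) * (Z.of_nat (f c) - Z.of_nat (g c))) by ring.
rewrite Z.abs_mul, (Z.abs_eq (Z.of_nat (S m))) by lia.
assert (Z.abs (Z.of_nat (f c) - Z.of_nat (g c)) <= 1) by lia. nia.
Qed.

Lemma ub_list {X : Type} (d : X -> X -> R) (V : PN -> (X -> Prop) -> Prop) (l : list PN) :
  (forall i, In i l -> uniformly_bounded d (V i)) ->
  exists C, forall i, In i l -> forall A, V i A -> forall x y, A x -> A y -> (d x y <= C)%R.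
Proof.
induction l as [|j l IH]; intros H.
- exists 0%R; intros i [].
- destruct IH as [C HC]; [intros i Hi; apply H; right; exact Hi|].
  destruct (H j (or_introl eq_refl)) as [Cj [_ HCj]].
  exists (Rmax C Cj). intros i [<-|Hi] A HA x y Hx Hy.
  + apply Rle_trans with Cj; [apply (HCj A HA x y Hx Hy)|apply Rmax_r].
  + apply Rle_trans with C; [apply (HC i Hi A HA x y Hx Hy)|apply Rmax_l].
Qed.

Lemma nat_above (C : R) : exists N : nat, (C < INR N)%R.
Proof.
destruct (archimed C) as [H _].
destruct (Z_le_gt_dec 0 (up C)) as [Hz|Hz].
- exists (Z.to_nat (up C)). rewrite INR_IZR_INZ, Z2Nat.id by exact Hz. lra.
- exists 0%nat. simpl. assert (IZR (up C) <= 0)%R by (apply IZR_le; lia). lra.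
Qed.

Lemma PN_eq (a b : PN) : proj1_sig a = proj1_sig b -> a = b.
Proof.
destruct a as [a Ha], b as [b Hb]; simpl; intros ->. f_equal. apply Peano_dec.le_unique.
Qed.

Close Scope Z_scope.
From Stdlib Require Import ClassicalEpsilon.
From mathcomp Require Import all_boot all_fingroup.
From mathcomp Require Import zify.
Set Implicit Arguments. Unset Strict Implicit. Unset Printing Implicit Defensive.

Lemma inv_even (T : finType) (f : T -> T) (A : {set T}) :
  {in A, forall x, f x \in A} -> {in A, forall x, f (f x) = x} ->
  {in A, forall x, f x != x} -> ~~ odd #|A|.
Proof.
have [c] := ubnP #|A|; elim: c A => // c IH A ltAc fA ffA nfA.
case: (set_0Vmem A) => [->|[x xA]]; first by rewrite cards0.
have fxA : f x \in A := fA x xA.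
have fxx : f x != x := nfA x xA.
set A' := A :\ x :\ f x.
have cardA : #|A| = #|A'|.+2.
  rewrite /A' (cardsD1 x A) xA (cardsD1 (f x) (A :\ x)) in_setD1 fxx fxA.
  by rewrite add1n add1n.
have HA' : forall z, z \in A' -> [/\ z \in A, z != x & z != f x].
  by move=> z; rewrite !in_setD1 => /and3P [H1 H2 H3].
rewrite cardA /= negbK; apply: IH.
- by move: ltAc; rewrite cardA; lia.
- move=> z /HA' [zA zx zfx]; rewrite !in_setD1 fA // andbT.
  apply/andP; split.
  + apply/negP => /eqP e; move/negP: zx; apply; apply/eqP.
    by rewrite -(ffA z zA) e ffA.
  + apply/negP => /eqP e; move/negP: zfx; apply; apply/eqP.
    by rewrite -(ffA z zA) e.
- by move=> z /HA' [zA _ _]; apply: ffA.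
- by move=> z /HA' [zA _ _]; apply: nfA.
Qed.

Section Sperner.
Variables (m n : nat) (L : {ffun 'I_m.+1 -> nat} -> nat).
Local Notation k := m.+1.
Local Notation Pt := {ffun 'I_k -> nat}.
Local Notation Y := {ffun 'I_k -> 'I_n.+1}.

Definition vtx (y : Y) (p : 'S_k) (i : 'I_k.+1) : Pt :=
  [ffun c => y c + (nat_of_ord ((p^-1)%g c) < i)].

Definition door (d : Y * 'S_k * 'I_k.+1) : bool :=
  let: (y, p, j) := d in
  [forall l : 'I_k, [exists i : 'I_k.+1, (i != j) && (L (vtx y p i) == l.+1)]].

Lemma door_img y p j : door (y, p, j) ->
  forall i, i != j -> exists l : 'I_k, L (vtx y p i) = l.+1 /\
     forall i', i' != j -> L (vtx y p i') = l.+1 -> i' = i.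
Proof.
move=> /forallP Hd.
pose g (l : 'I_k) := odflt ord0 [pick i | (i != j) && (L (vtx y p i) == l.+1)].
have gP : forall l, g l != j /\ L (vtx y p (g l)) = l.+1.
  move=> l; rewrite /g; case: pickP => [i /andP [H1 /eqP H2] //|H].
  by have /existsP [i Hi] := Hd l; rewrite H in Hi.
have ginj : injective g.
  move=> l1 l2 e; apply/val_inj.
  have [_ e1] := gP l1; have [_ e2] := gP l2.
  by move: e1; rewrite e e2 => -[].
have img : g @: setT = [set~ j].
  apply/eqP; rewrite eqEcard; apply/andP; split.
    by apply/subsetP => i /imsetP [l _ ->]; rewrite in_setC1; case: (gP l).
  by rewrite card_imset // cardsC1 cardsT !card_ord.
have inimg : forall i, i != j -> exists l, i = g l.
  move=> i ij; have : i \in g @: setT by rewrite img in_setC1.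
  by case/imsetP => l _ ->; exists l.
move=> i ij; have [l ->] := inimg i ij; exists l; split; first by case: (gP l).
move=> i' i'j e; have [l' el'] := inimg i' i'j.
have [_ e'] := gP l'; rewrite el' e' in e.
by rewrite el'; congr g; apply/val_inj; case: e.
Qed.

Definition full y p := forall l : 'I_k.+1, exists i, L (vtx y p i) = l.

Hypothesis H0 : forall x, L x <= k.

Lemma door_pair y p j : door (y, p, j) -> ~ full y p ->
  exists j', [/\ j' != j, L (vtx y p j') = L (vtx y p j) & door (y, p, j')].
Proof.
move=> Hd nf.
have Hd' := Hd; move/forallP in Hd'.
have Hlj : 0 < L (vtx y p j).
  rewrite lt0n; apply/negP => /eqP e; apply: nf => l.
  have [l0|lp] := eqVneq (nat_of_ord l) 0; first by exists j; rewrite e l0.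
  have /existsP [i /andP [_ /eqP Hi]] := Hd' (inord l.-1).
  exists i; rewrite Hi inordK; last by have := ltn_ord l; lia.
  by rewrite prednK // lt0n.
have lk := H0 (vtx y p j).
have /existsP [j' /andP [j'j /eqP Hj']] := Hd' (inord (L (vtx y p j)).-1).
rewrite inordK in Hj'; last by lia.
have Ej : L (vtx y p j') = L (vtx y p j) by rewrite Hj'; lia.
exists j'; split => //.
apply/forallP => l; have /existsP [i0 /andP [i0j /eqP Hi0]] := Hd' l.
apply/existsP; have [e|ne] := eqVneq i0 j'.
  by exists j; rewrite eq_sym j'j /= -Ej -e Hi0.
by exists i0; rewrite ne Hi0 eqxx.
Qed.

Definition Dset := [set d | door d].

Lemma doors_even : (forall y p, ~ full y p) -> ~~ odd #|Dset|.
Proof.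
move=> nf.
pose h (d : Y * 'S_k * 'I_k.+1) :=
  let: (y, p, j) := d in
  (y, p, odflt j [pick j' | (j' != j) && (L (vtx y p j') == L (vtx y p j)) && door (y, p, j')]).
have hP : forall y p j, door (y, p, j) -> exists j',
   [/\ h (y, p, j) = (y, p, j'), j' != j, L (vtx y p j') = L (vtx y p j) & door (y, p, j')].
  move=> y p j Hd; rewrite /h; case: pickP => [j' /andP [/andP [H1 /eqP H2] H3]|H].
    by exists j'.
  have [j' [H1 H2 H3]] := door_pair Hd (nf y p).
  by have := H j'; rewrite H1 H2 eqxx H3.
apply: (@inv_even _ h).
- move=> [[y p] j]; rewrite inE => Hd; have [j' [-> _ _ H]] := hP y p j Hd.
  by rewrite inE.
- move=> [[y p] j]; rewrite inE => Hd; have [j' [-> H1 H2 H3]] := hP y p j Hd.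
  have [j'' [-> H1' H2' H3']] := hP y p j' H3.
  have jj' : j != j' by rewrite eq_sym.
  have [l [El U]] := @door_img y p j' H3 j jj'.
  by rewrite (U j'') // H2' H2.
- move=> [[y p] j]; rewrite inE => Hd; have [j' [-> H1 _ _]] := hP y p j Hd.
  by apply: contra H1 => /eqP [->].
Qed.

Definition rot : 'S_k := perm (@ordS_inj k).
Definition up (y : Y) (c0 : 'I_k) : Y := [ffun c => inord (y c + (c == c0))].
Definition dn (y : Y) (c0 : 'I_k) : Y := [ffun c => inord (y c - (c == c0))].

Lemma val_ordS (q : 'I_k) : nat_of_ord (ordS q) = if nat_of_ord q == m then 0 else (nat_of_ord q).+1.
Proof.
rewrite /ordS /=; case: eqP => [->|ne]; first by rewrite modnn.
by rewrite modn_small //; have := ltn_ord q; lia.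
Qed.

Lemma val_ord_pred (q : 'I_k) : nat_of_ord (ord_pred q) = if nat_of_ord q == 0 then m else (nat_of_ord q).-1.
Proof.
rewrite /ord_pred /=; case: eqP => [->|ne]; first by rewrite add0n /= modn_small.
have lq := ltn_ord q.
have -> : (q + k).-1 = q.-1 + k by lia.
by rewrite modnDr modn_small //; lia.
Qed.

Lemma rotE q : rot q = ordS q.
Proof. by rewrite permE. Qed.

Lemma rotVE q : (rot^-1)%g q = ord_pred q.
Proof. by apply: (@perm_inj _ rot); rewrite permKV rotE ord_predK. Qed.

Lemma eq_permV (p : 'S_k) c c' : (c == p c') = ((p^-1)%g c == c').
Proof.
apply/eqP/eqP => [->|<-]; first by rewrite permK.
by rewrite permKV.
Qed.

Lemma vtx_swap y p (j : 'I_k.+1) i : 0 < j < k -> i != j ->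
  vtx y (tperm (inord j.-1) (inord j) * p)%g i = vtx y p i.
Proof.
move=> /andP [j0 jk] ij; apply/ffunP => c; rewrite !ffunE invMg permM tpermV.
have ij' : nat_of_ord i != nat_of_ord j by [].
congr addn; case: tpermP => [->|->|//]; rewrite !inordK; try lia.
Qed.

Lemma vtx_up (y : Y) (p : 'S_k) (i : 'I_k.+1) : y (p ord0) < n -> i != ord_max ->
  vtx (up y (p ord0)) (rot * p)%g i = vtx y p (inord i.+1).
Proof.
move=> yn im; have im' : nat_of_ord i != k by [].
have ik := ltn_ord i.
apply/ffunP => c; rewrite !ffunE invMg permM rotVE val_ord_pred eq_permV.
have hy : y c + (p^-1%g c == ord0) < n.+1.
  case: eqP => [e|_]; last by rewrite addn0.
  by move: yn; rewrite -e permKV addn1.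
rewrite inordK // inordK; last by lia.
case: eqP => [->|ne] /=; first by lia.
have ne' : nat_of_ord (p^-1%g c) != 0 by apply/eqP => e; apply: ne; apply/val_inj.
rewrite ifF; last by apply/negbTE.
rewrite addn0; congr addn; move: ne'; case: (nat_of_ord _) => [|q] //= _; lia.
Qed.

Lemma vtx_dn (y : Y) (p : 'S_k) (i : 'I_k.+1) : 0 < y (p ord_max) -> i != ord0 ->
  vtx (dn y (p ord_max)) (rot^-1 * p)%g i = vtx y p (inord i.-1).
Proof.
move=> yn i0; have i0' : nat_of_ord i != 0 by [].
have ik := ltn_ord i.
apply/ffunP => c; rewrite !ffunE invMg permM invgK rotE val_ordS eq_permV.
have hy : y c - (p^-1%g c == ord_max) < n.+1.
  by rewrite ltnS; apply: leq_trans (leq_subr _ _) _; rewrite -ltnS.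
rewrite inordK // inordK; last by lia.
case: eqP => [e|ne] /=.
  have ec : c = p ord_max by rewrite -e permKV.
  rewrite e eqxx /= -ec in yn *; lia.
have ne' : nat_of_ord (p^-1%g c) != m by apply/eqP => e; apply: ne; apply/val_inj.
rewrite ifF; last by apply/negbTE.
rewrite subn0; congr addn; move: ne'; case: (nat_of_ord _) => [|q] /= ne'; lia.
Qed.


Definition fz (x : Pt) : nat := find (fun c => x (inord c) == 0) (iota 0 k).

Lemma fz_has (x : Pt) (c : 'I_k) : x c = 0 -> has (fun c => x (inord c) == 0) (iota 0 k).
Proof.
move=> e; apply/hasP; exists (nat_of_ord c); first by rewrite mem_iota /= ltn_ord.
by rewrite inord_val e.
Qed.

Lemma fz_lt (x : Pt) (c : 'I_k) : x c = 0 -> fz x < k.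
Proof. by move=> /fz_has; rewrite has_find size_iota. Qed.

Lemma fz_zero (x : Pt) (c : 'I_k) : x c = 0 -> x (inord (fz x)) = 0.
Proof.
move=> e; have := nth_find 0 (fz_has e); rewrite nth_iota ?add0n; last exact: fz_lt e.
by move/eqP.
Qed.

Lemma fz_before (x : Pt) c' : c' < fz x -> c' < k -> x (inord c') != 0.
Proof.
move=> lt ck; have := before_find 0 lt; rewrite nth_iota ?add0n //.
by move/negbT.
Qed.

Lemma fz_le (x : Pt) (c : 'I_k) : x c = 0 -> fz x <= c.
Proof.
move=> e; rewrite leqNgt; apply/negP => lt.
have := fz_before lt (ltn_ord c); by rewrite inord_val e.
Qed.

Lemma fz_eq (x : Pt) (c : 'I_k) : x c = 0 -> (forall c' : 'I_k, c' < c -> x c' != 0) -> fz x = c.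
Proof.
move=> e H; apply/eqP; rewrite eqn_leq fz_le //= leqNgt; apply/negP => lt.
have := H (inord (fz x)); rewrite inordK; last by have := ltn_ord c; lia.
by move/(_ lt); rewrite (fz_zero e).
Qed.

Hypothesis H1 : forall (x : Pt) (c : 'I_k), x c = 0 -> L x = (fz x).+1.
Hypothesis H2 : forall (x : Pt) (c : 'I_k), x c = n.+1 -> L x != c.+1.

Lemma door0 (y : Y) (p : 'S_k) : door (y, p, ord0) -> y (p ord0) < n.
Proof.
move=> /forallP Hd; rewrite ltn_neqAle -ltnS ltn_ord andbT; apply/negP => /eqP e.
have /existsP [i /andP [i0 /eqP Hi]] := Hd (p ord0).
have i0' : 0 < i by rewrite lt0n.
have := H2 (x := vtx y p i) (c := p ord0).
rewrite Hi eqxx ffunE permK e /= i0' => /(_ (addn1 _)); by [].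
Qed.

Lemma doormax (y : Y) (p : 'S_k) : door (y, p, ord_max) -> y (p ord_max) = 0 :> nat ->
  y = [ffun => ord0] /\ p = 1%g.
Proof.
move=> Hd y0.
have zz : forall i : 'I_k.+1, i != ord_max -> vtx y p i (p ord_max) = 0.
  move=> i im; rewrite ffunE permK y0 /=.
  have : nat_of_ord i != k by []; have := ltn_ord i; move=> h1 h2.
  have -> : (m < i) = false by apply/negbTE; rewrite -leqNgt; lia.
  by [].
pose F i := fz (vtx y p (inord i)).
have Fk : forall i, i <= m -> F i < k.
  move=> i im; apply: (fz_lt (c := p ord_max)); apply: zz.
  by apply/eqP => /(congr1 val) /=; rewrite inordK; lia.
have mono : forall i1 i2, i1 <= i2 -> i2 <= m -> F i1 <= F i2.
  move=> i1 i2 l12 l2.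
  have e2 : vtx y p (inord i2) (p ord_max) = 0.
    by apply: zz; apply/eqP => /(congr1 val) /=; rewrite inordK; lia.
  have z2 := fz_zero e2.
  have h : vtx y p (inord i1) (inord (F i2)) = 0.
    move: z2; rewrite /F !ffunE !inordK; try lia.
  by have := fz_le h; rewrite inordK //; apply: Fk.
have inj : forall i1 i2, i1 <= m -> i2 <= m -> F i1 = F i2 -> i1 = i2.
  move=> i1 i2 l1 l2 e.
  have n1 : (inord i1 : 'I_k.+1) != ord_max.
    by apply/eqP => /(congr1 val) /=; rewrite inordK; lia.
  have n2 : (inord i2 : 'I_k.+1) != ord_max.
    by apply/eqP => /(congr1 val) /=; rewrite inordK; lia.
  have [l [El U]] := door_img Hd n1.
  have L1 : L (vtx y p (inord i1)) = (F i1).+1 := H1 (zz _ n1).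
  have L2 : L (vtx y p (inord i2)) = (F i2).+1 := H1 (zz _ n2).
  have := U _ n2; rewrite L2 -e -L1 El => /(_ erefl).
  by move/(congr1 val) => /=; rewrite !inordK; lia.
have strict : forall i, i < m -> F i < F i.+1.
  move=> i im; rewrite ltn_neqAle (mono i i.+1 (leqnSn i) im) andbT.
  by apply/eqP => e; have := inj _ _ (ltnW im) im e; lia.
have Fge : forall i, i <= m -> i <= F i.
  elim=> // i IH im; have := strict i im; have := IH (ltnW im); lia.
have Fle : forall t, t <= m -> F (m - t) <= m - t.
  elim=> [_|t IH tm]; first by rewrite subn0 -ltnS Fk.
  have := strict (m - t.+1); have := IH (ltnW tm).
  have -> : (m - t.+1).+1 = m - t by lia.
  move=> h1 h2; have := h2 ltac:(lia); lia.
have Fid : forall i, i <= m -> F i = i.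
  move=> i im; apply/eqP; rewrite eqn_leq Fge // andbT.
  by have := Fle (m - i) ltac:(lia); rewrite subKn.
have Z : forall c : 'I_k, y c = 0 :> nat /\ ~~ ((p^-1)%g c < c).
  move=> c; have hc : nat_of_ord c <= m by rewrite -ltnS.
  have e2 : vtx y p (inord c) (p ord_max) = 0.
    by apply: zz; apply/eqP => /(congr1 val) /=; rewrite inordK; lia.
  have := fz_zero e2; rewrite -/(F c) Fid // inord_val ffunE inordK; last by lia.
  by move/eqP; rewrite addn_eq0 eqb0 => /andP [/eqP -> ->].
have P : forall c : 'I_k, (p^-1)%g c = c.
  move=> c; apply/val_inj => /=; have [_ h1] := Z c.
  have := ltn_ord ((p^-1)%g c); have := ltn_ord c; move=> hc hp.
  case: (ltnP (nat_of_ord c) m) => cm; last by rewrite -leqNgt in h1; lia.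
  have e2 : vtx y p (inord c.+1) (p ord_max) = 0.
    by apply: zz; apply/eqP => /(congr1 val) /=; rewrite inordK; lia.
  have lt : nat_of_ord c < fz (vtx y p (inord c.+1)).
    by rewrite -/(F c.+1) Fid //; lia.
  have := fz_before lt hc; rewrite inord_val ffunE inordK; last by lia.
  have [-> _] := Z c; rewrite add0n eqb0 negbK => h2.
  rewrite -leqNgt in h1; lia.
split.
  by apply/ffunP => c; rewrite ffunE; apply/val_inj; have [h _] := Z c; exact: h.
apply/permP => c; rewrite perm1; apply: (@perm_inj _ (p^-1)%g).
by rewrite permK P.
Qed.

Definition y0 : Y := [ffun => ord0].
Definition bd : Y * 'S_k * 'I_k.+1 := (y0, 1%g, ord_max).

Lemma door_b : door bd.
Proof.
apply/forallP => l; apply/existsP; exists (inord l).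
have lk := ltn_ord l.
apply/andP; split.
  by apply/eqP => /(congr1 val) /=; rewrite inordK; lia.
have vE : forall c : 'I_k, vtx y0 1 (inord l) c = (c < l).
  by move=> c; rewrite !ffunE invg1 perm1 inordK //; lia.
rewrite (H1 (c := l)) ?vE ?ltnn //; apply/eqP; congr S.
apply: fz_eq; first by rewrite vE ltnn.
by move=> c' lt; rewrite vE lt.
Qed.


Definition phi (d : Y * 'S_k * 'I_k.+1) : Y * 'S_k * 'I_k.+1 :=
  let: (y, p, j) := d in
  if j == ord0 then
    (if y (p ord0) < n then (up y (p ord0), (rot * p)%g, ord_max) else d)
  else if j == ord_max then
    (if 0 < y (p ord_max) then (dn y (p ord_max), (rot^-1 * p)%g, ord0) else d)
  else (y, (tperm (inord j.-1) (inord j) * p)%g, j).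

Lemma rot_max (p : 'S_k) : (rot * p)%g ord_max = p ord0.
Proof. by rewrite permM rotE; congr (p _); apply: ord_inj; rewrite val_ordS /= eqxx. Qed.

Lemma rotV_0 (p : 'S_k) : (rot^-1 * p)%g ord0 = p ord_max.
Proof. by rewrite permM rotVE; congr (p _); apply: ord_inj; rewrite val_ord_pred. Qed.

Lemma dn_up (y : Y) c : y c < n -> dn (up y c) c = y.
Proof.
move=> yc; apply/ffunP => c'; rewrite !ffunE; apply: ord_inj => /=.
have := ltn_ord (y c'); case: eqP => [->|_] h.
  by rewrite inordK; [rewrite inordK; lia|rewrite inordK; lia].
by rewrite !addn0 subn0 inord_val inord_val.
Qed.

Lemma up_dn (y : Y) c : 0 < y c -> up (dn y c) c = y.
Proof.
move=> yc; apply/ffunP => c'; rewrite !ffunE; apply: ord_inj => /=.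
have := ltn_ord (y c'); case: eqP => [->|_] h.
  by rewrite inordK; [rewrite inordK; lia|rewrite inordK; lia].
by rewrite !addn0 subn0 inord_val inord_val.
Qed.

Lemma phi_b : phi bd = bd.
Proof. rewrite /phi /bd /= eqxx. by rewrite ffunE. Qed.

Lemma phi_prop d : d \in Dset :\ bd ->
  [/\ door (phi d), phi (phi d) = d & phi d != d].
Proof.
case: d => [[y p] j]; rewrite in_setD1 inE => /andP [nb Hd].
have Hd' := Hd; move/forallP in Hd'.
have mmax : (ord_max : 'I_k.+1) != ord0 by [].
case: (eqVneq j ord0) => [ej|j0].
  subst j; have yn := door0 Hd.
  have E : phi (y, p, ord0) = (up y (p ord0), (rot * p)%g, ord_max) by rewrite /phi eqxx yn.
  rewrite E; split.
  - apply/forallP => l; have /existsP [i /andP [i0 /eqP Hi]] := Hd' l.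
    apply/existsP; exists (inord i.-1).
    have i0' : nat_of_ord i != 0 by [].
    have ik := ltn_ord i.
    apply/andP; split.
      by apply/eqP => /(congr1 val) /=; rewrite inordK; lia.
    rewrite vtx_up //; last by apply/eqP => /(congr1 val) /=; rewrite inordK; lia.
    have -> : (inord (nat_of_ord (inord i.-1 : 'I_k.+1)).+1 : 'I_k.+1) = i.
      by rewrite inordK; [rewrite prednK ?lt0n // inord_val|lia].
    by rewrite Hi.
  - rewrite /phi (negbTE mmax) eqxx rot_max ffunE eqxx inordK; last by lia.
    rewrite addn1 /= dn_up //.
    by rewrite mulgA mulVg mul1g.
  - by apply/eqP => -[_ _].
case: (eqVneq j ord_max) => [ej|jm].
  subst j.
  have yn : 0 < y (p ord_max).
    rewrite lt0n; apply/negP => /eqP e.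
    have [ey ep] := doormax Hd e.
    by move: nb; rewrite /bd /y0 ey ep eqxx.
  have E : phi (y, p, ord_max) = (dn y (p ord_max), (rot^-1 * p)%g, ord0).
    by rewrite /phi (negbTE mmax) eqxx yn.
  rewrite E; split.
  - apply/forallP => l; have /existsP [i /andP [im /eqP Hi]] := Hd' l.
    apply/existsP; exists (inord i.+1).
    have im' : nat_of_ord i != k by [].
    have ik := ltn_ord i.
    apply/andP; split.
      by apply/eqP => /(congr1 val) /=; rewrite inordK; lia.
    rewrite vtx_dn //; last by apply/eqP => /(congr1 val) /=; rewrite inordK; lia.
    have -> : (inord (nat_of_ord (inord i.+1 : 'I_k.+1)).-1 : 'I_k.+1) = i.
      by rewrite inordK; [rewrite /= inord_val|lia].
    by rewrite Hi.
  - rewrite /phi eqxx rotV_0 ffunE eqxx inordK; last first.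
      by rewrite ltnS; apply: leq_trans (leq_subr _ _) _; rewrite -ltnS; exact: ltn_ord.
    have -> : y (p ord_max) - true < n.
      by change (nat_of_bool true) with 1; rewrite subn1 -ltnS prednK //; exact: ltn_ord.
    rewrite up_dn //.
    by rewrite mulgA mulgV mul1g.
  - by apply/eqP => -[_ _].
have jk : 0 < j < k.
  have := ltn_ord j; have : nat_of_ord j != 0 by [].
  have : nat_of_ord j != k by []. move=> h1 h2 h3; apply/andP; split; lia.
have E : phi (y, p, j) = (y, (tperm (inord j.-1) (inord j) * p)%g, j).
  by rewrite /phi (negbTE j0) (negbTE jm).
rewrite E; split.
- apply/forallP => l; have /existsP [i /andP [ij /eqP Hi]] := Hd' l.
  by apply/existsP; exists i; rewrite ij vtx_swap // Hi eqxx.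
- by rewrite /phi (negbTE j0) (negbTE jm) mulgA tperm2 mul1g.
- apply/eqP => -[e].
  have t1 : tperm (inord j.-1) (inord j) = 1%g :> 'S_k by apply: (mulIg p); rewrite e mul1g.
  have := congr1 (fun q : 'S_k => q (inord j.-1)) t1; rewrite /= tpermL perm1 => /(congr1 val) /=.
  by rewrite !inordK; lia.
Qed.

Lemma doors_odd : odd #|Dset|.
Proof.
rewrite (cardsD1 bd) inE door_b; change (nat_of_bool true) with 1; rewrite add1n /=.
apply: (@inv_even _ phi).
- move=> d dD; have [H1' H2' H3'] := phi_prop dD.
  rewrite in_setD1 inE H1' andbT; apply/eqP => e.
  by move: dD; rewrite -H2' e phi_b in_setD1 eqxx.
- by move=> d dD; have [_ -> _] := phi_prop dD.
- by move=> d dD; have [_ _ ->] := phi_prop dD.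
Qed.

Theorem sperner : ~ (forall y p, ~ full y p).
Proof. by move=> H; have := doors_even H; rewrite doors_odd. Qed.

End Sperner.

Section Lower.
Variable (nn : nat).
Local Notation k := nn.+1.
Local Notation Pt := {ffun 'I_k -> nat}.

Definition fx (x : Pt) : nat -> nat := fun c => x (inord c).

Lemma lower_main : Aset dLomega (fun x => List.In x (lst k)).
Proof.
split.
  split; first by exists (lst k).
  exists (mkPN (2 * k + 0)); rewrite /lst; apply/List.in_map_iff.
  by exists 0; split => //; apply/List.in_seq; split; apply/leP.
move=> [V [HV Hcov]].
have [C HC] : exists C, forall i, List.In i (lst k) -> forall A, V i A ->
    forall x y, A x -> A y -> Rle (dLomega x y) C.
  by apply: ub_list => i Hi; case: (HV i Hi).
have [Nb HNb] := nat_above C.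
pose ch (x : Pt) := constructive_indefinite_description _ (Hcov (emb nn (fx x))).
pose iof (x : Pt) := proj1_sig (ch x).
have iofP : forall x, List.In (iof x) (lst k) /\ exists U, V (iof x) U /\ U (emb nn (fx x)).
  by move=> x; exact: (proj2_sig (ch x)).
pose chU (x : Pt) := constructive_indefinite_description _ (proj2 (iofP x)).
pose Uof (x : Pt) := proj1_sig (chU x).
have UofP : forall x, V (iof x) (Uof x) /\ Uof x (emb nn (fx x)).
  by move=> x; exact: (proj2_sig (chU x)).
pose col (x : Pt) := proj1_sig (iof x) - 2 * k.
have colP : forall x, 0 < col x <= k.
  move=> x; have /lst_in [/ltP h1 /leP h2] := proj1 (iofP x).
  by rewrite /col; apply/andP; split; lia.
pose Phi (x : Pt) := exists w : Pt, (forall c, 1 <= w c <= Nb.+1) /\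
   w (inord (col x).-1) = 1 /\ Uof x (emb nn (fx w)).
pose L (x : Pt) := if [exists c, x c == 0] then (fz x).+1
   else if [forall c, x c <= Nb.+1] then
     (if excluded_middle_informative (Phi x) then col x else 0) else 0.
have H0 : forall x, L x <= k.
  move=> x; rewrite /L; case: ifPn => [/existsP [c /eqP e]|_]; first exact: fz_lt e.
  case: [forall c, x c <= Nb.+1]; last by [].
  case: (excluded_middle_informative (Phi x)) => [_|_] /=; last by [].
  by case/andP: (colP x).
have H1 : forall (x : Pt) c, x c = 0 -> L x = (fz x).+1.
  move=> x c e; rewrite /L.
  have -> : [exists c, x c == 0] = true by apply/existsP; exists c; apply/eqP.
  by [].
have H2 : forall (x : Pt) (c : 'I_k), x c = Nb.+1 -> L x != c.+1.
  move=> x c e; rewrite /L; case: (boolP [exists c, x c == 0]) => [/existsP [c' /eqP e']|nz].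
    apply/eqP => -[ef]; have := fz_zero e'; rewrite ef inord_val e; by [].
  case: [forall c, x c <= Nb.+1]; last by [].
  case: (excluded_middle_informative (Phi x)) => [[w [hw [w1 Uw]]]|_] /=; last by [].
  apply/eqP => ecol; rewrite ecol /= inord_val in w1.
  have Hd := HC (iof x) (proj1 (iofP x)) (Uof x) (proj1 (UofP x)) _ _ (proj2 (UofP x)) Uw.
  have Hge := emb_dist_ge nn (fx x) (fx w) c (ltP (ltn_ord c)).
  rewrite /fx !inord_val e w1 in Hge.
  rewrite /dLomega /= in Hd.
  have : Rle (INR Nb) (IZR (dinf (embl nn (fx x)) (embl nn (fx w)))).
    rewrite INR_IZR_INZ; apply: IZR_le.
    apply: Z.le_trans Hge. rewrite !Nat2Z.inj_succ.
    have -> : (Z.succ (Z.of_nat Nb) - Z.succ (Z.of_nat 0) = Z.of_nat Nb)%Z by lia.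
    rewrite Z.abs_eq; [nia|lia].
  move=> h; lra.
apply: (sperner H0 H1 H2) => y p Hfull.
have vb : forall i c, vtx y p i c <= Nb.+1.
  move=> i c; rewrite ffunE; apply: leq_trans (leq_add (leqnn _) (leq_b1 _)) _.
  by rewrite addn1; exact: ltn_ord.
have vd : forall i i' c, vtx y p i c <= vtx y p i' c + 1.
  move=> i i' c; rewrite !ffunE -addnA leq_add2l; apply: leq_trans (leq_b1 _) _.
  exact: leq_addl.
have [i0 Hi0] := Hfull ord0.
set z := vtx y p i0 in Hi0.
have nz : ~~ [exists c, z c == 0].
  by apply/negP => hz; move: Hi0; rewrite /L hz.
have inb : [forall c, z c <= Nb.+1] by apply/forallP => c; apply: vb.
have nPhi : ~ Phi z.
  move=> hP; move: Hi0; rewrite /L (negbTE nz) inb.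
  case: (excluded_middle_informative (Phi z)) => // _ /= e.
  by have := colP z; rewrite e.
have z1 : forall c, 1 <= z c.
  move=> c; rewrite lt0n; apply/negP => /eqP e; move/negP: nz; apply.
  by apply/existsP; exists c; rewrite e.
have [i1 Hi1] := Hfull (inord (col z)).
have cz := colP z.
rewrite inordK in Hi1; last by lia.
set y' := vtx y p i1 in Hi1.
case: (boolP [exists c, y' c == 0]) => fr.
  have [c /eqP e] := existsP fr.
  have ef : fz y' = (col z).-1 by move: Hi1; rewrite (H1 _ _ e); lia.
  have e0 := fz_zero e; rewrite ef in e0.
  apply: nPhi; exists z; split.
    by move=> c'; rewrite z1; apply: vb.
  split; last exact: (proj2 (UofP z)).
  have := vd i0 i1 (inord (col z).-1); rewrite -/z -/y' e0 => h.
  by have := z1 (inord (col z).-1); lia.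
have inb' : [forall c, y' c <= Nb.+1] by apply/forallP => c; apply: vb.
move: Hi1; rewrite /L (negbTE fr) inb'.
case: (excluded_middle_informative (Phi y')) => [hP|_] /= ecol; last by lia.
have ei : iof z = iof y'.
  apply: PN_eq; move: ecol; rewrite /col.
  have /lst_in [/ltP h1 /leP h2] := proj1 (iofP z).
  have /lst_in [/ltP h3 /leP h4] := proj1 (iofP y'); lia.
have eU : Uof z = Uof y'.
  case: (Classical_Prop.classic (Uof z = Uof y')) => // ne; exfalso.
  have [_ Hr] := HV (iof z) (proj1 (iofP z)).
  have := Hr _ _ (proj1 (UofP z)) _ ne _ _ (proj2 (UofP z)) (proj2 (UofP y')).
  rewrite ei; move/(_ (proj1 (UofP y'))) => h.
  have Hle := emb_dist_le nn (fx z) (fx y').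
  have : (dinf (embl nn (fx z)) (embl nn (fx y')) <= Z.of_nat k)%Z.
    apply: Hle => c /ltP hc; rewrite /fx; split; apply/leP; apply: vd.
  move=> h2; rewrite /dLomega /= in h.
  have /lst_in [/ltP h3 _] := proj1 (iofP y').
  have : Rle (IZR (dinf (embl nn (fx z)) (embl nn (fx y')))) (IZR (Z.of_nat k)) by apply: IZR_le.
  rewrite -INR_IZR_INZ => h4.
  have : Rlt (INR k) (INR (proj1_sig (iof y'))) by apply: lt_INR; lia.
  move=> h5; lra.
apply: nPhi; move: hP => [w [hw [w1 Uw]]]; exists w; split => //.
by rewrite /col ei eU; split => //; move: w1; rewrite /col.
Qed.

End Lower.

Theorem theorem2 : trasdim_eq_omega dLomega.
Proof.
split; first exact: unbounded.
split; first exact: upper.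
move=> [n Hn].
exact: (@not_ordle _ n _ _ (lst_nodup n.+1) (lst_len n.+1) (@lower_main n) Hn).
Qed.
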